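(* In the perceptive model, the neighbors discovery task can be solved deterministically in $O(\log N)$ rounds.
   Context: Model (perceptive): $n>4$ agents are at distinct, arbitrary initial positions on a circle of circumference $1$ and act in synchronised unit-time rounds. Each agent has its own notion of right (clockwise) and left; these need not be consistent across agents. At the start of each round every agent $a$ chooses $\mathrm{dir}_a\in\{\text{right},\text{left}\}$ and moves at unit speed. Agents never pass: two colliding agents instantly reverse direction. There is no communication. At the end of each round every agent learns two values, both measured relative to its start-of-round position and in its own orientation: - the clockwise distance to its end-of-round position; - the distance to its first collision in that round. Agents have distinct IDs in $\{1,\dots,N\}$ with $N\ge n$ known. For an agent $a$, $\mathrm{Left}(a)$ and $\mathrm{Right}(a)$ denote its immediate neighbours on the ring in its left and right directions (by its own orientation). Neighbors discovery task: each agent $a$ must - learn the positions of $\mathrm{Left}(a)$ and $\mathrm{Right}(a)$ relative to its own initial position, and - determine whether $\mathrm{Left}(a)$ and $\mathrm{Right}(a)$ have the same sense of direction as $a$. *)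

(* Defs.v *)
From Stdlib Require Import Reals.
From mathcomp Require Import all_boot.

Set Implicit Arguments.
Unset Strict Implicit.
Unset Printing Implicit Defensive.

(* Perceptive model of agents on a circle of circumference 1.               *)
(* Agents are named by their clockwise rank 0..n-1 of the initial           *)
(* configuration: agent k starts at position x k, with                      *)
(* 0 <= x 0 < x 1 < ... < x (n-1) < 1 (every configuration of n distinct    *)
(* points arises this way, since the naming carries no information:         *)
(* IDs and orientations are arbitrary functions of k).                      *)
(* o k = true  iff agent k's "right" is the global clockwise direction.     *)

Definition cwdist (a b : R) : R := frac_part (b - a).

(* an observation at the end of a round:
   (clockwise distance, in the agent's own orientation, from its start-of-round
    position to its end-of-round position ;
    distance to its first collision in the round, None if it has no collision) *)
Definition obs := (R * option R)%type.

(* A deterministic algorithm (the same code for all agents; it may depend on N,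
   see the theorem). [choose id h] : direction for the next round (true = right,
   false = left) of the agent with ID [id] whose observation history so far is
   [h]. [output id h] = (distance from its initial position to Right(a) going
   right, distance from its initial position to Left(a) going left,
   Right(a) has the same sense of direction, Left(a) has the same sense). *)
Record algorithm := Algorithm {
  choose : nat -> seq obs -> bool;
  output : nat -> seq obs -> (R * R * bool * bool)
}.

Definition minR (s : seq R) : option R :=
  match s with
  | [::] => None
  | g :: gs => Some (foldr Rmin g gs)
  end.

(* State after some rounds: (s, h) where agent k currently sits at the
   initial position of rank (k + s) %% n (the set of occupied positions is
   invariant, since every agent covers length 1 per round and agents never
   pass each other), and h k is agent k's observation history (oldest first). *)
Fixpoint run (A : algorithm) (n : nat) (x : nat -> R) (o : nat -> bool)
    (id : nat -> nat) (r : nat) : nat * (nat -> seq obs) :=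
  match r with
  | 0 => (0, fun _ => [::])
  | r'.+1 =>
    let: (s, h) := run A n x o id r' in
    (* global direction of agent k: clockwise iff chosen direction = own right
       direction matches orientation *)
    let cw k := choose A (id k) (h k) == o k in
    let pos k := (k + s) %% n in
    (* rank shift of the round: (#clockwise - #counterclockwise) mod n *)
    let m := (count cw (iota 0 n) + (n - count (fun k => ~~ cw k) (iota 0 n))) %% n in
    let fb k :=
      let p := pos k in
      let q := (p + m) %% n in
      (* end position, measured clockwise in the agent's own orientation *)
      let dend := if o k then cwdist (x p) (x q) else cwdist (x q) (x p) in
      (* first collision: with the nearest agent moving in the opposite
         direction, ahead in the direction of motion, met at half the gap *)
      let gaps := [seq (if cw k then cwdist (x p) (x (pos j))
                                else cwdist (x (pos j)) (x p))
                  | j <- iota 0 n & cw j != cw k] in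
      (dend, omap (fun g : R => Rdiv g (IZR 2)) (minR gaps)) in
    ((s + m) %% n, fun k => rcons (h k) (fb k))
  end.

Definition history A n x o id r (k : nat) : seq obs := (run A n x o id r).2 k.

Definition valid_positions (n : nat) (x : nat -> R) : Prop :=
  Rle 0 (x 0) /\ Rlt (x n.-1) 1 /\ (forall i, i.+1 < n -> Rlt (x i) (x i.+1)).

Definition valid_ids (N n : nat) (id : nat -> nat) : Prop :=
  (forall k, k < n -> 1 <= id k <= N) /\
  (forall k l, k < n -> l < n -> id k = id l -> k = l).

Definition expected (n : nat) (x : nat -> R) (o : nat -> bool) (k : nat)
  : R * R * bool * bool :=
  let kc := k.+1 %% n in
  let kcc := (k + n).-1 %% n in
  let dcw := cwdist (x k) (x kc) in
  let dccw := cwdist (x kcc) (x k) in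
  let Rk := if o k then kc else kcc in
  let Lk := if o k then kcc else kc in
  ((if o k then dcw else dccw), (if o k then dccw else dcw),
   o Rk == o k, o Lk == o k).

(* Main.v *)
Require Import Defs.
From Stdlib Require Import Reals Lra Lia.
From mathcomp Require Import all_boot.

Set Implicit Arguments.
Unset Strict Implicit.
Unset Printing Implicit Defensive.

From Stdlib Require Import FunctionalExtensionality.
From Stdlib Require List.
From mathcomp Require Import zify.
Section RR.
Local Open Scope R_scope.
Lemma fp_small (r : R) : (0 <= r < 1) -> frac_part r = r.
Proof.
move=> H. have [_ <-] := @Int_part_frac_part_spec r 0%Z r H ltac:(simpl; lra). by [].
Qed.

Lemma fp_neg (r : R) : (Ropp 1 < r < 0) -> frac_part r = (r + 1).
Proof.
move=> H. have [_ <-] := @Int_part_frac_part_spec r (-1)%Z (r+1) ltac:(lra) ltac:(simpl; lra). by [].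
Qed.

End RR.
Section Geo.
Local Open Scope R_scope.
Variables (n : nat) (x : nat -> R).
Hypothesis Hv : valid_positions n x.

Lemma x_mono i j : (i < j)%N -> (j < n)%N -> (x i < x j).
Proof.
case: Hv => _ [_ Hs].
move=> Hij Hjn; elim: j Hij Hjn => [|j IH] //.
rewrite ltnS leq_eqVlt => /orP[/eqP -> | Hij] Hjn.
  by apply: Hs.
apply: Rlt_trans (IH Hij (ltnW Hjn)) (Hs _ Hjn).
Qed.

Lemma x_le i j : (i <= j)%N -> (j < n)%N -> (x i <= x j).
Proof.
rewrite leq_eqVlt => /orP[/eqP -> | H] Hj; first lra.
by apply: Rlt_le; apply: x_mono.
Qed.

Lemma x_bnd i : (i < n)%N -> (0 <= x i < 1).
Proof.
case: Hv => H0 [H1 _] Hi.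
split; first by apply: Rle_trans H0 (x_le (leq0n i) Hi).
apply: Rle_lt_trans H1. apply: x_le => //. by rewrite -ltnS prednK // (leq_ltn_trans (leq0n _) Hi).
by rewrite prednK // (leq_ltn_trans (leq0n _) Hi).
Qed.

Lemma cw_lt i j : (i < j)%N -> (j < n)%N -> cwdist (x i) (x j) = (x j - x i).
Proof.
move=> Hij Hj. rewrite /cwdist fp_small //.
have := x_mono Hij Hj. have := x_bnd (ltn_trans Hij Hj). have := x_bnd Hj. lra.
Qed.

Lemma cw_gt i j : (i < j)%N -> (j < n)%N -> cwdist (x j) (x i) = (1 - (x j - x i)).
Proof.
move=> Hij Hj. rewrite /cwdist fp_neg.
  lra.
have := x_mono Hij Hj. have := x_bnd (ltn_trans Hij Hj). have := x_bnd Hj. lra.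
Qed.

Lemma succ_min k l : (1 < n)%N -> (k < n)%N -> (l < n)%N -> l != k ->
  let s := k.+1 %% n in
  (cwdist (x k) (x s) <= cwdist (x k) (x l)) /\
  (l != s -> (cwdist (x k) (x s) < cwdist (x k) (x l))).
Proof.
move=> Hn Hk Hl Hlk /=.
have [Hkn|Hkn] := ltnP k.+1 n.
  rewrite (modn_small Hkn) (cw_lt (ltnSn k) Hkn).
  have B1 := x_bnd Hkn. have B2 := x_bnd Hl.
  have [Hlt|Hgt] := ltnP l k.
    rewrite (cw_gt Hlt Hk). split; [lra|] => _; lra.
  have Hkl : (k < l)%N by rewrite ltn_neqAle eq_sym Hlk.
  rewrite (cw_lt Hkl Hl).
  have := x_le Hkl Hl.
  split; first lra.
  move=> Hs. have Hkl' : (k.+1 < l)%N by rewrite ltn_neqAle eq_sym Hs Hkl.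
  have := x_mono Hkl' Hl. lra.
have En : n = k.+1 by apply/eqP; rewrite eqn_leq Hkn Hk.
have -> : (k.+1 %% n = 0)%N by rewrite En modnn.
have H0k : (0 < k)%N by rewrite -ltnS -En.
rewrite (cw_gt H0k Hk).
have Hlk' : (l < k)%N by rewrite ltn_neqAle Hlk /= -ltnS -En.
rewrite (cw_gt Hlk' Hk).
have := x_le (leq0n l) Hl.
split; first lra.
move=> Hs. have H0l : (0 < l)%N by rewrite lt0n.
have := x_mono H0l Hl. lra.
Qed.

Lemma pred_min k l : (1 < n)%N -> (k < n)%N -> (l < n)%N -> l != k ->
  let s := (k + n).-1 %% n in
  (cwdist (x s) (x k) <= cwdist (x l) (x k)) /\
  (l != s -> (cwdist (x s) (x k) < cwdist (x l) (x k))).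
Proof.
move=> Hn Hk Hl Hlk /=.
have n0 : (0 < n)%N by exact: (leq_ltn_trans (leq0n _) Hk).
case: k Hk Hlk => [|k] Hk Hlk.
  rewrite add0n modn_small; last by rewrite prednK // ltnSn.
  have Hn1 : (n.-1 < n)%N by rewrite prednK.
  have H0 : (0 < n.-1)%N by rewrite -ltnS prednK.
  rewrite (cw_gt H0 Hn1).
  have H0l : (0 < l)%N by rewrite lt0n.
  rewrite (cw_gt H0l Hl).
  have Hln : (l <= n.-1)%N by rewrite -ltnS prednK.
  have := x_le Hln Hn1.
  split; first lra.
  move=> Hs. have Hl' : (l < n.-1)%N by rewrite ltn_neqAle Hs Hln.
  have := x_mono Hl' Hn1. lra.
rewrite addSn /= modnDr modn_small; last by apply: ltn_trans Hk.
have Hk' : (k < n)%N by apply: ltn_trans Hk.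
rewrite (cw_lt (ltnSn k) Hk).
have B1 := x_bnd Hk'. have B2 := x_bnd Hl.
have [Hlt|Hgt] := ltnP l k.+1.
  have Hlk2 : (l <= k)%N by rewrite -ltnS.
  rewrite (cw_lt Hlt Hk). have := x_le Hlk2 Hk'.
  split; first lra.
  move=> Hs. have Hl' : (l < k)%N by rewrite ltn_neqAle Hs Hlk2.
  have := x_mono Hl' Hk'. lra.
have Hkl : (k.+1 < l)%N by rewrite ltn_neqAle eq_sym Hlk Hgt.
rewrite (cw_gt Hkl Hl).
split; [lra|] => _; lra.
Qed.
End Geo.
Section Lists.
Local Open Scope R_scope.

Lemma foldRmin_le g gs v : List.In v (g::gs) -> foldr Rmin g gs <= v.
Proof.
elim: gs v => [|a gs IH] v /=.
  case=> [<-|[]]; lra.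
case=> [<-|[<-|H]].
- apply: Rle_trans (Rmin_r _ _) _. apply: IH; by left.
- apply: Rmin_l.
- apply: Rle_trans (Rmin_r _ _) _. apply: IH; by right.
Qed.

Lemma foldRmin_in g gs : List.In (foldr Rmin g gs) (g::gs).
Proof.
elim: gs => [|a gs IH] /=; first by left.
pattern (Rmin a (foldr Rmin g gs)); apply: Rmin_case; first by right; left.
case: IH => [H|H]; [left; exact H | right; right; exact H].
Qed.

Lemma minR_in t v : minR t = Some v -> List.In v t.
Proof. case: t => [//|g gs] /= [<-]; exact: foldRmin_in. Qed.

Lemma minR_le t v w : minR t = Some v -> List.In w t -> v <= w.
Proof. case: t => [//|g gs] /= [<-]; exact: foldRmin_le. Qed.

Lemma In_mapfilter (f : nat -> R) (P : pred nat) (s : seq nat) w :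
  List.In w [seq f l | l <- s & P l] -> exists l, l \in s /\ P l /\ w = f l.
Proof.
elim: s => [|a s IH] //=.
case Pa: (P a) => /=.
  case=> [<-|H]; first by exists a; rewrite inE eqxx.
  have [l [H1 [H2 H3]]] := IH H. by exists l; rewrite inE H1 orbT.
move=> H. have [l [H1 [H2 H3]]] := IH H. by exists l; rewrite inE H1 orbT.
Qed.

Lemma mapfilter_In (f : nat -> R) (P : pred nat) (s : seq nat) l :
  l \in s -> P l -> List.In (f l) [seq f l | l <- s & P l].
Proof.
elim: s => [|a s IH] //=.
rewrite inE => /orP[/eqP ->|H] Pl.
  by rewrite Pl; left.
case: (P a) => /=; last exact: IH.
by right; apply: IH.
Qed.

Lemma gaps_lemma (f : nat -> R) (P : pred nat) (s : seq nat) (nb : nat) (D : R) :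
  (forall l, l \in s -> P l -> D <= f l /\ (l != nb -> D < f l)) ->
  let L := [seq f l | l <- s & P l] in
  (forall v, minR L = Some v -> D <= v) /\
  (nb \in s -> P nb -> f nb = D -> minR L = Some D) /\
  (~~ P nb -> forall v, minR L = Some v -> D < v).
Proof.
move=> H L; split; [|split].
- move=> v Hv. have [l [H1 [H2 ->]]] := In_mapfilter (minR_in Hv).
  by case: (H l H1 H2).
- move=> Hnb Pnb Fnb.
  have Hin : List.In D L by rewrite -Fnb; exact: mapfilter_In.
  case E: (minR L) => [v|].
    have := minR_le E Hin. have [l [H1 [H2 ->]]] := In_mapfilter (minR_in E).
    case: (H l H1 H2) => ? _ ?. f_equal; lra.
  by move: E Hin; rewrite /L; case: [seq f l | l <- s & P l].
- move=> Pnb v Hv. have [l [H1 [H2 ->]]] := In_mapfilter (minR_in Hv).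
  case: (H l H1 H2) => _; apply. by apply: contraNneq Pnb => <-.
Qed.

Definition optmin (a b : option R) : option R :=
  match a, b with
  | Some u, Some v => Some (Rmin u v)
  | Some u, None => Some u
  | None, b => b
  end.

Lemma fold_spec (s : seq nat) (Q : pred nat) (cl : nat -> option R) (a : R) :
  (forall j, j \in s -> Q j -> forall v, cl j = Some v -> a <= v) ->
  let F := foldr (fun j acc => if Q j then optmin (cl j) acc else acc) None s in
  (forall v, F = Some v -> a <= v) /\
  ((exists j, j \in s /\ Q j /\ cl j = Some a) -> F = Some a).
Proof.
elim: s => [|j s IH] H /=.
  by split=> // [[j []]].
have H' : forall j0, j0 \in s -> Q j0 -> forall v, cl j0 = Some v -> a <= v.
  by move=> j0 Hj0; apply: H; rewrite inE Hj0 orbT.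
have [IH1 IH2] := IH H'.
set F := foldr _ None s in IH1 IH2 *.
have Hj : Q j -> forall v, cl j = Some v -> a <= v by apply: H; rewrite inE eqxx.
split.
  move=> v. case Qj: (Q j); last exact: IH1.
  case Ec: (cl j) => [u|]; case EF: F => [w|] //= [<-].
  - have := Hj Qj u Ec; have := IH1 w EF. move=> h1 h2. by apply: Rmin_glb.
  - exact: Hj Qj u Ec.
  - exact: IH1 w EF.
move=> [i [Hi [Qi Ci]]].
move: Hi; rewrite inE => /orP[/eqP Eij|Hi].
  subst i. rewrite Qi Ci. case EF: F => [w|] //=.
  f_equal; apply: Rmin_left; exact: IH1 w EF.
have -> : F = Some a by apply: IH2; exists i.
case Qj: (Q j) => //. case Ec: (cl j) => [u|] //=.
f_equal; apply: Rmin_right; exact: Hj Qj u Ec.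
Qed.
End Lists.
Definition bitb (i a : nat) : bool := odd (a %/ 2 ^ i).

Lemma bits_eq L : forall a b, a < 2 ^ L -> b < 2 ^ L ->
  (forall i, i < L -> bitb i a = bitb i b) -> a = b.
Proof.
elim: L => [|L IH] a b.
  by rewrite expn0 !ltnS !leqn0 => /eqP -> /eqP ->.
move=> Ha Hb H.
rewrite -(odd_double_half a) -(odd_double_half b).
have H0 : odd a = odd b by have := H 0 isT; rewrite /bitb expn0 !divn1.
rewrite H0; congr (_ + _.*2).
apply: IH.
- rewrite -divn2 ltn_divLR // -expnSr; done.
- rewrite -divn2 ltn_divLR // -expnSr; done.
move=> i Hi. have := H i.+1 Hi. rewrite /bitb expnS !divnMA !divn2; exact.
Qed.

Lemma bits_diff L a b : a < 2 ^ L -> b < 2 ^ L -> a != b ->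
  exists i, i < L /\ bitb i a != bitb i b.
Proof.
move=> Ha Hb Hab.
case E: (has (fun i => bitb i a != bitb i b) (iota 0 L)).
  move/hasP: E => [i Hi Hd]. exists i; split => //. by move: Hi; rewrite mem_iota.
exfalso; move/negP: Hab; apply; apply/eqP; apply: (bits_eq Ha Hb) => i Hi.
apply/eqP; move/hasPn: E => /(_ i); rewrite mem_iota add0n Hi /= => /(_ isT).
by rewrite negbK.
Qed.

Definition cpair (j a : nat) : bool :=
  match j with
  | 0 => true
  | 1 => false
  | j'.+2 => if odd j' then ~~ bitb j'./2 a else bitb j'./2 a
  end.

Definition chooseR (r a : nat) : bool :=
  if odd r then ~~ cpair r./2 a else cpair r./2 a.

Section AlgDef.
Local Open Scope R_scope.
Definition coll (h : seq obs) (j : nat) : option R := (nth (R0, None) h j.*2).2.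
Definition dmin (P a : nat) (h : seq obs) (c : bool) : option R :=
  foldr (fun j acc => if cpair j a == c then optmin (coll h j) acc else acc) None (iota 0 P).
Definition valo (a : option R) : R := match a with Some v => v | None => R0 end.
Definition sflag (h : seq obs) (j : nat) (v : R) : bool :=
  match coll h j with Some u => if Req_EM_T u v then false else true | None => true end.
Definition Alg (P : nat) : algorithm :=
  Algorithm (fun a h => chooseR (size h) a)
   (fun a h => let vR := valo (dmin P a h true) in let vL := valo (dmin P a h false) in
     (Rmult 2 vR, Rmult 2 vL, sflag h 0 vR, sflag h 1 vL)).
End AlgDef.

Definition Mshift (n : nat) (cw : nat -> bool) : nat :=
  (count cw (iota 0 n) + (n - count (fun k => ~~ cw k) (iota 0 n))) %% n.

Definition FB (n : nat) (x : nat -> R) (o : nat -> bool) (cw : nat -> bool) (s k : nat) : obs :=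
  let pos k := (k + s) %% n in
  let m := Mshift n cw in
  let p := pos k in
  let q := (p + m) %% n in
  let dend := if o k then cwdist (x p) (x q) else cwdist (x q) (x p) in
  let gaps := [seq (if cw k then cwdist (x p) (x (pos j))
                            else cwdist (x (pos j)) (x p))
              | j <- iota 0 n & cw j != cw k] in
  (dend, omap (fun g : R => Rdiv g (IZR 2)) (minR gaps)).

Section Run.
Variables (P n : nat) (x : nat -> R) (o : nat -> bool) (id : nat -> nat).
Let A := Alg P.
Definition S r := (run A n x o id r).1.
Definition H r := (run A n x o id r).2.
Definition cwr r k := chooseR r (id k) == o k.

Lemma run_S0 r : run A n x o id r.+1 =
  let (s, h) := run A n x o id r in
  ((s + Mshift n (fun k => Defs.choose A (id k) (h k) == o k)) %% n,
   fun k => rcons (h k) (FB n x o (fun k => Defs.choose A (id k) (h k) == o k) s k)).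
Proof. reflexivity. Qed.

Lemma size_H r k : size (H r k) = r.
Proof.
elim: r k => [|r IH] k //.
rewrite /H run_S0. case E: (run A n x o id r) => [s h] /=.
by rewrite size_rcons -[h]/((s, h).2) -E IH.
Qed.

Lemma run_S r : run A n x o id r.+1 =
  ((S r + Mshift n (cwr r)) %% n, fun k => rcons (H r k) (FB n x o (cwr r) (S r) k)).
Proof.
rewrite run_S0 /S /H. case E: (run A n x o id r) => [s h] /=.
have -> : (fun k => Defs.choose A (id k) (h k) == o k) = cwr r.
  apply: functional_extensionality => k /=.
  have := size_H r k. rewrite /H E /= => ->. by [].
by [].
Qed.

Lemma S_S r : S r.+1 = (S r + Mshift n (cwr r)) %% n.
Proof. by rewrite {1}/S run_S. Qed.

Lemma H_S r k : H r.+1 k = rcons (H r k) (FB n x o (cwr r) (S r) k).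
Proof. by rewrite {1}/H run_S. Qed.

Lemma H_prefix r r' k d i : i < r -> r <= r' -> nth d (H r' k) i = nth d (H r k) i.
Proof.
move=> Hi; elim: r' => [|r' IH]; first by rewrite leqn0 => /eqP ->.
rewrite leq_eqVlt => /orP[/eqP ->//|Hr].
rewrite H_S nth_rcons size_H (leq_trans Hi Hr) IH //.
Qed.

Lemma H_last r k d : nth d (H r.+1 k) r = FB n x o (cwr r) (S r) k.
Proof. by rewrite H_S nth_rcons size_H ltnn eqxx. Qed.

Lemma Mshift_eq cw : Mshift n cw = (count cw (iota 0 n)).*2 %% n.
Proof.
rewrite /Mshift.
have := count_predC cw (iota 0 n). rewrite size_iota.
have := count_size cw (iota 0 n). rewrite size_iota.
rewrite /predC /=.
set a := count cw _. set b := count _ _.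
move=> *; congr (_ %% n); lia.
Qed.

Lemma cwr_odd j k : cwr (j.*2.+1) k = ~~ cwr (j.*2) k.
Proof.
rewrite /cwr /chooseR /= odd_double /= uphalf_double doubleK.
by case: (cpair j (id k)); case: (o k).
Qed.

Lemma S_even j : 0 < n -> S (j.*2) = 0.
Proof.
move=> n0; elim: j => [|j IH]; first by [].
rewrite doubleS S_S S_S IH add0n !Mshift_eq.
have -> : count (cwr j.*2.+1) (iota 0 n) = count (predC (cwr j.*2)) (iota 0 n).
  by apply: eq_count => k; rewrite cwr_odd.
have := count_predC (cwr j.*2) (iota 0 n). rewrite size_iota.
set a := count _ _. set b := count _ _ => Hab.
rewrite modnDml modnDm.
have -> : a.*2 + b.*2 = n * 2 by lia.
by rewrite modnMr.
Qed.

Lemma obs_even T j k d : 0 < n -> j.*2 < T ->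
  nth d (H T k) j.*2 = FB n x o (cwr (j.*2)) 0 k.
Proof.
move=> n0 Hj. rewrite (H_prefix k d (ltnSn _) Hj) H_last S_even //.
Qed.
End Run.
Section Main.
Variables (N n : nat) (x : nat -> R) (o : nat -> bool) (id : nat -> nat) (L : nat).
Hypotheses (Hn : 4 < n) (Hx : valid_positions n x) (Hid : valid_ids N n id) (HN : N < 2 ^ L).
Variable k : nat.
Hypothesis Hk : k < n.
Let P := L.+1.*2.
Let T := P.*2.

Definition nbr (c : bool) := if c == o k then k.+1 %% n else (k + n).-1 %% n.
Definition Dc (c : bool) := if c == o k then cwdist (x k) (x (k.+1 %% n))
                            else cwdist (x ((k + n).-1 %% n)) (x k).

Lemma n0 : 0 < n. Proof. exact: leq_ltn_trans (leq0n _) Hk. Qed.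
Lemma n1 : 1 < n. Proof. exact: leq_trans _ Hn. Qed.

Lemma nbr_lt c : nbr c < n.
Proof. by rewrite /nbr; case: (c == o k); rewrite ltn_pmod // n0. Qed.

Lemma nbr_neq c : nbr c != k.
Proof.
rewrite /nbr; case: (c == o k).
  have [H1|H1] := ltnP k.+1 n.
    by rewrite modn_small // neq_ltn ltnSn orbT.
  have En : n = k.+1 by apply/eqP; rewrite eqn_leq H1 Hk.
  rewrite En modnn; apply/eqP => Ek. by move: Hn; rewrite En -Ek.
case: k Hk => [|k'] Hk'.
  rewrite add0n modn_small; last by rewrite prednK ?n0.
  apply/eqP => E. by move: Hn; rewrite -(prednK n0) E.
rewrite addSn /= modnDr modn_small; last exact: ltn_trans Hk'.
by rewrite neq_ltn ltnSn.
Qed.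

Lemma round j : j < P ->
  let c := cpair j (id k) in
  let cw := cwr o id j.*2 in
  let cl := coll (H P n x o id T k) j in
  (forall v, cl = Some v -> Rle (Rdiv (Dc c) (IZR 2)) v) /\
  (cw (nbr c) != cw k -> cl = Some (Rdiv (Dc c) (IZR 2))) /\
  (cw (nbr c) == cw k -> cl <> Some (Rdiv (Dc c) (IZR 2))).
Proof.
move=> Hj c cw cl.
have HjT : j.*2 < T by rewrite /T ltn_double.
rewrite /cl /coll (obs_even P x o id k _ n0 HjT) /FB /=.
have Hcwk : cw k = (c == o k) by rewrite /cw /cwr /chooseR odd_double doubleK.
rewrite addn0 (modn_small Hk).
set f := fun l => if cw k then cwdist (x k) (x ((l + 0) %% n)) else cwdist (x ((l + 0) %% n)) (x k).
have Hf : forall l, l \in iota 0 n -> cw l != cw k ->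
    Rle (Dc c) (f l) /\ (l != nbr c -> Rlt (Dc c) (f l)).
  move=> l; rewrite mem_iota add0n => /= Hl Hlk.
  have Hlk' : l != k by apply: contraNneq Hlk => ->.
  rewrite /f addn0 (modn_small Hl) Hcwk /Dc /nbr.
  case: (c == o k).
    exact: (succ_min Hx n1 Hk Hl Hlk').
  exact: (pred_min Hx n1 Hk Hl Hlk').
have [G1 [G2 G3]] := gaps_lemma Hf.
change (cwr o id j.*2) with cw.
have Hfn : f (nbr c) = Dc c.
  rewrite /f addn0 (modn_small (nbr_lt c)) Hcwk /Dc /nbr; by case: (c == o k).
have Hmem : nbr c \in iota 0 n by rewrite mem_iota add0n nbr_lt.
case E: (minR _) => [g|] /=.
  split; [|split].
  - move=> v [<-]. have := G1 g E. lra.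
  - move=> Hop. have := G2 Hmem Hop Hfn. by rewrite E => -[->].
  - move=> Hsame [Hg]. have H3 : ~~ (cw (nbr c) != cw k) by rewrite Hsame.
    have := G3 H3 g E. lra.
split; [by []|split]; last by [].
move=> Hop. have := G2 Hmem Hop Hfn. by rewrite E.
Qed.

Lemma cwr_even j l : cwr o id j.*2 l = (cpair j (id l) == o l).
Proof. by rewrite /cwr /chooseR odd_double doubleK. Qed.

Lemma exists_round (c : bool) : exists j, (j < P) /\ (cpair j (id k) = c) /\ (cwr o id j.*2 (nbr c) != cwr o id j.*2 k).
Proof.
have Hnb := nbr_lt c. have Hneq := nbr_neq c.
case: Hid => Hb Hinj.
have Hidn : id (nbr c) != id k.
  apply/eqP => E. by move/eqP: Hneq; apply; apply: Hinj.
case Eo: (o (nbr c) == o k).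
  have Hk2 : id k < 2 ^ L by have := Hb k Hk; case/andP => _ h; exact: leq_ltn_trans h HN.
  have Hn2 : id (nbr c) < 2 ^ L by have := Hb _ Hnb; case/andP => _ h; exact: leq_ltn_trans h HN.
  have Hne2 : id k != id (nbr c) by rewrite eq_sym.
  have [i [Hi Hd]] := bits_diff Hk2 Hn2 Hne2.
  set b := bitb i (id k) != c.
  exists (b + i.*2).+2; split.
    rewrite /P; case: (b) => /=; lia.
  rewrite !cwr_even /cpair oddD odd_double addbF half_bit_double.
  move/eqP: Eo => ->.
  move: Hd; rewrite /b. move: (bitb i (id k)) (bitb i (id (nbr c))) (o k) => p q ok.
  by destruct c; destruct p; destruct q; destruct ok.
exists (if c then 0 else 1); split; first by rewrite /P; destruct c.
rewrite !cwr_even; move: Eo; move: (o k) (o (nbr c)) => p q; by destruct c; destruct p; destruct q.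
Qed.

Lemma dmin_eq (c : bool) : dmin P (id k) (H P n x o id T k) c = Some (Rdiv (Dc c) (IZR 2)).
Proof.
have Hr : forall j, j \in iota 0 P -> cpair j (id k) == c ->
    forall v, coll (H P n x o id T k) j = Some v -> Rle (Rdiv (Dc c) (IZR 2)) v.
  move=> j; rewrite mem_iota add0n => /= Hj /eqP Ec v Hv.
  have [R1 _] := round Hj. rewrite -Ec; exact: R1 v Hv.
have [_ F2] := fold_spec Hr.
apply: F2.
have [j [Hj [Ec Hop]]] := exists_round c.
exists j; split; first by rewrite mem_iota add0n.
split; first by rewrite Ec.
have [_ [R2 _]] := round Hj. rewrite -Ec; apply: R2; by rewrite Ec.
Qed.

Lemma sflag_spec h j v b : (coll h j = Some v -> b = false) -> (coll h j <> Some v -> b = true) ->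
  sflag h j v = b.
Proof.
rewrite /sflag; case E: (coll h j) => [u|] H1 H2.
  case: Req_EM_T => [Heq|Hne]; first by rewrite H1 // Heq.
  by rewrite H2 // => -[].
by rewrite H2.
Qed.

Lemma main_out : output (Alg P) (id k) (H P n x o id T k) = expected n x o k.
Proof.
rewrite /= !dmin_eq /= /expected.
have P0 : 0 < P by [].
have P1 : 1 < P by [].
have [_ [R2 R3]] := round P0.
have [_ [Q2 Q3]] := round P1.
move: R2 R3 Q2 Q3; rewrite /= /cwr /chooseR /= /nbr /Dc /=.
have E2 : forall r : R, Rmult (IZR 2) (Rdiv r (IZR 2)) = r by move=> r; field.
rewrite !E2.
case: (o k); case: (o (k.+1 %% n)); case: (o ((k+n).-1 %% n)) => /= R2 R3 Q2 Q3;
congr (_, _, _, _);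
  (apply: sflag_spec => Hc; first [done | by case: (R3 isT Hc) | by case: (Hc (R2 isT))
     | by case: (Q3 isT Hc) | by case: (Hc (Q2 isT))]).
Qed.
End Main.

Theorem proposition5 :
  exists c : nat, forall N : nat,
  exists (T : nat) (A : algorithm),
    T <= c * trunc_log 2 N /\
    forall (n : nat) (x : nat -> R) (o : nat -> bool) (id : nat -> nat),
      4 < n -> n <= N -> valid_positions n x -> valid_ids N n id ->
      forall k, k < n -> output A (id k) (history A n x o id T k) = expected n x o k.
Proof.
exists 8 => N.
case: (ltnP N 5) => HN5.
  exists 0, (Alg 0); split => // n x o id H4 HnN; exfalso; lia.
set t := trunc_log 2 N.
exists (t.+2.*2.*2), (Alg (t.+2.*2)); split.
  have : 2 <= t by apply: trunc_log_max => //; apply: leq_trans _ HN5.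
  lia.
move=> n x o id H4 HnN Hx Hid k Hk.
have HN : N < 2 ^ t.+1 := trunc_log_ltn N (isT : 1 < 2).
exact: (@main_out N n x o id t.+1 H4 Hx Hid HN k Hk).
Qed.
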